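(* Let $A$ be a nonempty finite set with $|A|=n$ and $\Sigma\in\mathbb{R}$. The map $\varphi$ defined by $\varphi(d)(x,y)=d(x,\cdot)+d(y,\cdot)-d(x,y)-d(\cdot,\cdot)+\Sigma/n$ is a bijection from the set of metrics on $A$ onto the set of $\Sigma$-proximities on $A$, and its inverse is the map $\psi$ given by $\psi(\sigma)(x,y)=\tfrac12(\sigma(x,x)+\sigma(y,y))-\sigma(x,y)$.
   Context: A metric on $A$ is a function $d:A^2\to\mathbb{R}$ such that for all $x,y,z\in A$: $d(x,y)=0$ iff $x=y$, and $d(x,y)+d(x,z)-d(y,z)\ge 0$. Notation: $d(x,\cdot)=\frac1n\sum_{t\in A}d(x,t)$, $d(\cdot,\cdot)=\frac1{n^2}\sum_{s,t\in A}d(s,t)$. A function $\sigma:A^2\to\mathbb{R}$ is a $\Sigma$-proximity on $A$ if for all $x,y,z\in A$: (1) $\sum_{t\in A}\sigma(x,t)=\Sigma$; (2) $\sigma(x,y)+\sigma(x,z)-\sigma(y,z)\le\sigma(x,x)$, with strict inequality whenever $z=y$ and $x\ne y$. *)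

(* Defs.v *)
From mathcomp Require Import all_boot all_order all_algebra.
Set Implicit Arguments. Unset Strict Implicit. Unset Printing Implicit Defensive.
Import Order.TTheory GRing.Theory Num.Theory.
Local Open Scope ring_scope.

Section Defs.
Variables (R : realFieldType) (A : finType).

(* metric on A, exactly as in the paper (symmetry/nonnegativity follow) *)
Definition is_metric (d : A -> A -> R) : Prop :=
  (forall x y, d x y = 0 <-> x = y) /\
  (forall x y z, 0 <= d x y + d x z - d y z).

Definition is_proximity (Sigma : R) (s : A -> A -> R) : Prop :=
  (forall x, \sum_(t : A) s x t = Sigma) /\
  (forall x y z, s x y + s x z - s y z <= s x x) /\
  (forall x y, x != y -> s x y + s x y - s y y < s x x).

(* d(x,.) and d(.,.) with n = #|A| *)
Definition dpt (d : A -> A -> R) (x : A) : R :=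
  (#|A|%:R)^-1 * \sum_(t : A) d x t.
Definition dall (d : A -> A -> R) : R :=
  ((#|A|%:R) ^+ 2)^-1 * \sum_(s : A) \sum_(t : A) d s t.

Definition phi (Sigma : R) (d : A -> A -> R) : A -> A -> R :=
  fun x y => dpt d x + dpt d y - d x y - dall d + Sigma / #|A|%:R.

Definition psi (s : A -> A -> R) : A -> A -> R :=
  fun x y => 2^-1 * (s x x + s y y) - s x y.
End Defs.

(* Main.v *)
Require Import Defs.
From mathcomp Require Import all_boot all_order all_algebra.
From mathcomp Require Import ring lra.
From Stdlib Require Import FunctionalExtensionality.
Import Order.TTheory GRing.Theory Num.Theory.
Local Open Scope ring_scope.

Lemma sum_dpt (R : realFieldType) (A : finType) (d : A -> A -> R) :
  \sum_(t : A) dpt d t = (#|A|%:R)^-1 * \sum_(s : A) \sum_(t : A) d s t.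
Proof. by rewrite /dpt -mulr_sumr. Qed.

Lemma cst_sum (R : realFieldType) (A : finType) (c : R) :
  \sum_(t : A) c = #|A|%:R * c.
Proof. by rewrite sumr_const mulr_natl. Qed.

Theorem theorem1 (R : realFieldType) (A : finType) (Sigma : R) :
  (0 < #|A|)%N ->
  (forall d : A -> A -> R, is_metric d -> is_proximity Sigma (phi Sigma d)) /\
  (forall s : A -> A -> R, is_proximity Sigma s -> is_metric (psi s)) /\
  (forall d : A -> A -> R, is_metric d -> psi (phi Sigma d) = d) /\
  (forall s : A -> A -> R, is_proximity Sigma s -> phi Sigma (psi s) = s).
Proof.
move=> hA.
have hn : (#|A|%:R : R) != 0 by rewrite pnatr_eq0 -lt0n.
have d0 : forall d : A -> A -> R, is_metric d -> forall x, d x x = 0.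
  by move=> d [h _] x; apply/h.
split; [|split; [|split]].
- move=> d hd; have hxx := d0 d hd; case: hd => [hz htr].
  have hsym : forall x y, d x y = d y x.
    move=> x y; have := htr x y x; have := htr y x y; rewrite !hxx => h1 h2.
    apply/eqP; rewrite eq_le; apply/andP; split; lra.
  split; [|split].
  + move=> x; rewrite !(big_split, sumrB) /= sumrN !cst_sum sum_dpt /dall /dpt.
    set S := \sum_(t : A) d x t; set SS := \sum_(s : A) _.
    by field.
  + move=> x y z; rewrite /phi hxx; have := htr x y z; lra.
  + move=> x y hxy; rewrite /phi !hxx.
    have h1 : d x y != 0 by apply/eqP => /hz /eqP; rewrite (negbTE hxy).
    have h2 := htr x y y; rewrite hxx in h2.
    have h3 : 0 < d x y by rewrite lt0r h1 /=; lra.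
    lra.
- move=> s [hsum [htr hstr]]; split.
  + move=> x y; split; last by move=> ->; rewrite /psi; field.
    move=> h; apply/eqP; apply/negPn/negP => hxy.
    have := hstr x y hxy; move: h; rewrite /psi; lra.
  + move=> x y z; have := htr x y z; rewrite /psi; lra.
- move=> d hd; have hxx := d0 d hd.
  apply: functional_extensionality => x; apply: functional_extensionality => y; rewrite /psi /phi !hxx.
  by field.
- move=> s [hsum _]; apply: functional_extensionality => x; apply: functional_extensionality => y.
  have hdpt : forall z, dpt (psi s) z = 2^-1 * s z z + 2^-1 * (#|A|%:R)^-1 * \sum_(t : A) s t t - (#|A|%:R)^-1 * Sigma.
    move=> z; rewrite /dpt /psi sumrB hsum -mulr_sumr big_split /= cst_sum.
    by field.
  have hall : dall (psi s) = (#|A|%:R)^-1 * \sum_(t : A) s t t - (#|A|%:R)^-1 * Sigma.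
    rewrite /dall.
    have -> : \sum_(u : A) \sum_(t : A) psi s u t = #|A|%:R * \sum_(u : A) dpt (psi s) u.
      rewrite mulr_sumr; apply: eq_bigr => u _; rewrite /dpt mulrA mulfV //; ring.
    rewrite (eq_bigr _ (fun u _ => hdpt u)) !(big_split, sumrB) /= -mulr_sumr !cst_sum.
    by field.
  rewrite /phi !hdpt hall /psi; by field.
Qed.
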